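(* Let $N\ge 0$ be an integer, let $h>0$, and let $T^{(i-1)},T^{(i)},T^{(i+1)}$ be three consecutive closed intervals of length $h$ on the real line (so $T^{(i-1)}=[x_{i-1/2}-h,x_{i-1/2}]$, $T^{(i)}=[x_{i-1/2},x_{i+1/2}]$, $T^{(i+1)}=[x_{i+1/2},x_{i+1/2}+h]$ with $x_{i+1/2}-x_{i-1/2}=h$), and let $\mathcal{S}^{(i)}=T^{(i-1)}\cup T^{(i)}\cup T^{(i+1)}$. For each $j\in\{i-1,i,i+1\}$ let $v^{(j)}$ be a given real polynomial of degree at most $N$ on $T^{(j)}$. Then there exists exactly one real polynomial $w$ of degree at most $M=3N+2$ on $\mathcal{S}^{(i)}$ such that $$\int_{T^{(j)}} w(x)\,\varphi(x)\,dx=\int_{T^{(j)}} v^{(j)}(x)\,\varphi(x)\,dx\qquad\text{for every polynomial }\varphi\text{ of degree at most }N\text{ and every } j\in\{i-1,i,i+1\}.$$ Equivalently, in matrix form: let $P_k$ denote the Legendre polynomial of degree $k$ on $[-1,1]$, set $a_{k,\ell}=\int_{-1}^1 P_k(s)P_\ell(s+2)\,ds$, $b_{k,\ell}=(-1)^{k+\ell}a_{k,\ell}$ and $c_{k,\ell}=\tfrac12(a_{k,\ell}+b_{k,\ell})$. Then the $(2N+2)\times(2N+2)$ matrix $B$ whose first $N+1$ rows are $(a_{k,N+1},\dots,a_{k,3N+2})$, $k=0,\dots,N$, and whose last $N+1$ rows are $(c_{k,N+1},\dots,c_{k,3N+2})$, $k=0,\dots,N$, is invertible, and consequently the reconstruction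 problem above has a unique solution.
   Context: This is the ''reconstruction'' (inverse $L^2$-projection) step of $P_NP_M$ schemes on the three-cell central stencil: the reconstructed polynomial $w$ of degree $M$ on the whole stencil is required to have the same moments as the given piecewise polynomial data of degree $N$ on each of the three cells, tested against all polynomials of degree at most $N$. The Legendre polynomials $P_k$ are the standard ones on $[-1,1]$ (orthogonal in $L^2(-1,1)$, $\int_{-1}^1 P_k^2=2/(2k+1)$). *)

(* Defs.v *)
From mathcomp Require Import all_boot all_order all_algebra.
Set Implicit Arguments. Unset Strict Implicit. Unset Printing Implicit Defensive.
Import Order.TTheory GRing.Theory Num.Theory.
Local Open Scope ring_scope.

Definition primp (R : realFieldType) (p : {poly R}) : {poly R} :=
  \poly_(i < (size p).+1) (if i is k.+1 then p`_k / k.+1%:R else 0).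

(* Riemann/Lebesgue integral of the polynomial function p over [a,b],
   computed exactly via the antiderivative (fundamental theorem of calculus). *)
Definition pint (R : realFieldType) (p : {poly R}) (a b : R) : R :=
  (primp p).[b] - (primp p).[a].

Definition legendre (R : realFieldType) (n : nat) : {poly R} :=
  ((2%:R ^+ n * n`!%:R)^-1) *: (('X ^+ 2 - 1) ^+ n)^`(n).

Definition acoef (R : realFieldType) (k l : nat) : R :=
  pint (legendre R k * (legendre R l \Po ('X + 2%:P))) (-1) 1.

Definition bcoef (R : realFieldType) (k l : nat) : R :=
  (-1) ^+ (k + l) * acoef R k l.

Definition ccoef (R : realFieldType) (k l : nat) : R :=
  (acoef R k l + bcoef R k l) / 2%:R.

Definition Bmat (R : realFieldType) (N : nat) : 'M[R]_(N.+1 + N.+1) :=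
  col_mx (\matrix_(k < N.+1, l < N.+1 + N.+1) acoef R k (N.+1 + l))
         (\matrix_(k < N.+1, l < N.+1 + N.+1) ccoef R k (N.+1 + l)).

(* Left endpoint of cell T^(i-1+j), j = 0,1,2, given x_{i-1/2} = x0. *)
Definition cell_left (R : realFieldType) (x0 h : R) (j : 'I_3) : R :=
  x0 - h + (j : nat)%:R * h.

(* Main.v *)
Require Import Defs.
From mathcomp Require Import all_boot all_order all_algebra.
From mathcomp Require Import ring lra zify.
Set Implicit Arguments. Unset Strict Implicit. Unset Printing Implicit Defensive.
Import Order.TTheory GRing.Theory Num.Theory.
Local Open Scope ring_scope.



Lemma coef_primp (R : realFieldType) (p : {poly R}) i :
  (primp p)`_i = if i is k.+1 then p`_k / k.+1%:R else 0.
Proof.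
rewrite /primp coef_poly; case: i => [|k] /=; first by [].
rewrite ltnS; case: ltnP => // hk; by rewrite nth_default ?mul0r.
Qed.

Lemma deriv_primp (R : realFieldType) (p : {poly R}) : (primp p)^`() = p.
Proof.
apply/polyP => i; have hn : (i.+1%:R : R) != 0 by rewrite pnatr_eq0.
by rewrite coef_deriv coef_primp -[_ *+ i.+1]mulr_natr divfK.
Qed.

Lemma deriv_eq0_const (R : realFieldType) (q : {poly R}) :
  q^`() = 0 -> forall a b, q.[a] = q.[b].
Proof.
move=> hq; have -> : q = (q`_0)%:P.
  apply/polyP => -[|i]; rewrite coefC //=.
  have := congr1 (fun r : {poly R} => r`_i) hq; rewrite coef_deriv coef0 => /eqP.
  by rewrite mulrn_eq0 /= => /eqP.
by move=> a b; rewrite !hornerC.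
Qed.

Lemma pint_anti (R : realFieldType) (p P : {poly R}) a b :
  P^`() = p -> pint p a b = P.[b] - P.[a].
Proof.
move=> hP; rewrite /pint.
have : (primp p - P)^`() = 0 by rewrite derivB deriv_primp hP subrr.
move=> /deriv_eq0_const H; have := H a b; rewrite !hornerD !hornerN.
move=> e; lra.
Qed.

Lemma pintD (R : realFieldType) (p q : {poly R}) a b :
  pint (p + q) a b = pint p a b + pint q a b.
Proof.
rewrite (@pint_anti _ _ (primp p + primp q)); last by rewrite derivD !deriv_primp.
rewrite /pint !hornerD; ring.
Qed.

Lemma pintZ (R : realFieldType) c (p : {poly R}) a b :
  pint (c *: p) a b = c * pint p a b.
Proof.
rewrite (@pint_anti _ _ (c *: primp p)); last by rewrite derivZ !deriv_primp.
rewrite /pint !hornerZ; ring.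
Qed.

Lemma pint0 (R : realFieldType) (a b : R) : pint 0 a b = 0.
Proof. by rewrite -(scale0r 0) pintZ mul0r. Qed.

Lemma pintN (R : realFieldType) (p : {poly R}) a b : pint (- p) a b = - pint p a b.
Proof. by rewrite -scaleN1r pintZ mulN1r. Qed.

Lemma pintB (R : realFieldType) (p q : {poly R}) a b :
  pint (p - q) a b = pint p a b - pint q a b.
Proof. by rewrite pintD pintN. Qed.

Lemma pint_sum (R : realFieldType) (I : Type) (r : seq I) (F : I -> {poly R}) a b :
  pint (\sum_(i <- r) F i) a b = \sum_(i <- r) pint (F i) a b.
Proof.
elim: r => [|x r IH]; first by rewrite !big_nil pint0.
by rewrite !big_cons pintD IH.
Qed.

Lemma pint_split (R : realFieldType) (p : {poly R}) a b c :
  pint p a b + pint p b c = pint p a c.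
Proof. rewrite /pint; ring. Qed.

Lemma pint_shift (R : realFieldType) (p : {poly R}) c a b :
  pint (p \Po ('X + c%:P)) a b = pint p (a + c) (b + c).
Proof.
rewrite (@pint_anti _ _ (primp p \Po ('X + c%:P))); last first.
  by rewrite deriv_comp deriv_primp derivD derivX derivC addr0 mulr1.
by rewrite /pint !horner_comp !hornerD !hornerX !hornerC.
Qed.

Lemma pint_refl (R : realFieldType) (p : {poly R}) a b :
  pint (p \Po (- 'X)) a b = pint p (- b) (- a).
Proof.
rewrite (@pint_anti _ _ (- (primp p \Po (- 'X)))); last first.
  by rewrite derivN deriv_comp deriv_primp derivN derivX mulrN1 opprK.
rewrite /pint !hornerN !horner_comp !hornerN !hornerX; ring.
Qed.



Lemma derivn_XsubC_exp (R : realFieldType) (b : R) k m :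
  (('X - b%:P) ^+ k)^`(m) = ('X - b%:P) ^+ (k - m) *+ k ^_ m.
Proof.
elim: m => [|m IH]; first by rewrite derivn0 subn0 ffactn0.
rewrite derivnS IH derivMn deriv_exp derivXsubC mul1r ffactnSr -mulrnA.
case: (ltnP m k) => hmk.
  by rewrite subnS mulnC.
have -> : (k - m)%N = 0%N by apply/eqP; rewrite subn_eq0.
by rewrite !muln0 mul0n !mulr0n.
Qed.

Lemma horner_derivn_XsubC_exp (R : realFieldType) (b : R) k m :
  ((('X - b%:P) ^+ k)^`(m)).[b] = if m == k then k`!%:R else 0.
Proof.
rewrite derivn_XsubC_exp hornerMn horner_exp hornerXsubC subrr.
case: (ltngtP m k) => hmk.
- by rewrite expr0n subn_eq0 leqNgt hmk /= mul0rn.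
- by rewrite ffact_small // mulr0n.
- by rewrite hmk subnn expr0 ffactnn.
Qed.

Fixpoint ibp (R : realFieldType) (n : nat) (G phi : {poly R}) : {poly R} :=
  match n with
  | 0 => G * phi
  | n'.+1 => ibp n' G^`() phi + (-1) ^+ n * (G * phi^`(n))
  end.

Lemma ibpS (R : realFieldType) n (G phi : {poly R}) :
  ibp n.+1 G phi = ibp n G^`() phi + (-1) ^+ n.+1 * (G * phi^`(n.+1)).
Proof. by []. Qed.

Lemma ibp0 (R : realFieldType) (G phi : {poly R}) : ibp 0 G phi = G * phi.
Proof. by []. Qed.

Lemma ibp_deriv (R : realFieldType) n (G phi : {poly R}) :
  (ibp n G phi)^`() = G^`(n.+1) * phi + (-1) ^+ n * (G * phi^`(n.+1)).
Proof.
elim: n G => [|n IH] G.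
  by rewrite ibp0 derivM expr0 mul1r !derivn1.
rewrite ibpS derivD IH derivM derivM !derivSn -!derivnS.
have -> : ((-1) ^+ n.+1 : {poly R})^`() = 0.
  by rewrite -polyCN -rmorphXn derivC.
rewrite exprS !derivSn; ring.
Qed.

Lemma ibp_at0 (R : realFieldType) n (G phi : {poly R}) a :
  (forall j, (j <= n)%N -> (G^`(j)).[a] = 0) -> (ibp n G phi).[a] = 0.
Proof.
elim: n G => [|n IH] G hG.
  by rewrite ibp0 hornerM -(derivn0 G) hG // mul0r.
rewrite ibpS hornerD IH; last by move=> j hj; rewrite -derivSn hG.
by rewrite !hornerM -(derivn0 G) hG // mul0r mulr0 add0r.
Qed.

Lemma ibp_pow_big (R : realFieldType) n (G : {poly R}) b k :
  (n < k)%N -> (ibp n G (('X - b%:P) ^+ k)).[b] = 0.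
Proof.
elim: n G => [|n IH] G hk.
  rewrite ibp0 hornerM horner_exp hornerXsubC subrr expr0n.
  by case: k hk => // k _; rewrite mulr0.
rewrite ibpS hornerD IH; last exact: ltnW.
rewrite !hornerM horner_derivn_XsubC_exp.
by rewrite (ltn_eqF hk) !mulr0 add0r.
Qed.

Lemma ibp_pow (R : realFieldType) n (G : {poly R}) b k :
  (k <= n)%N ->
  (ibp n G (('X - b%:P) ^+ k)).[b] = (-1) ^+ k * k`!%:R * (G^`(n - k)).[b].
Proof.
elim: n G => [|n IH] G hk.
  move: hk; rewrite leqn0 => /eqP ->.
  by rewrite ibp0 hornerM expr0 hornerC derivn0 !mul1r mulr1.
rewrite ibpS hornerD !hornerM horner_derivn_XsubC_exp.
case: (ltngtP k n.+1) => hkn.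
- rewrite IH // !mulr0 addr0 -derivSn subSn //.
- by move: hk; rewrite leqNgt hkn.
- rewrite hkn ibp_pow_big // add0r subnn derivn0 horner_exp hornerN hornerC.
  ring.
Qed.



Lemma pint_ibp (R : realFieldType) n (G phi : {poly R}) a b :
  (size phi <= n.+1)%N ->
  pint (G^`(n.+1) * phi) a b = (ibp n G phi).[b] - (ibp n G phi).[a].
Proof.
move=> hs; apply: pint_anti; rewrite ibp_deriv (derivn_poly0 hs).
by rewrite !mulr0 addr0.
Qed.

Lemma vanish_to_ortho (R : realFieldType) n (G phi : {poly R}) a b :
  (forall j, (j <= n)%N -> (G^`(j)).[a] = 0) ->
  (forall j, (j <= n)%N -> (G^`(j)).[b] = 0) ->
  (size phi <= n.+1)%N -> pint (G^`(n.+1) * phi) a b = 0.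
Proof.
by move=> ha hb hs; rewrite pint_ibp // !ibp_at0 // subrr.
Qed.

Lemma ortho_to_vanish (R : realFieldType) n (G : {poly R}) a b :
  (forall j, (j <= n)%N -> (G^`(j)).[a] = 0) ->
  (forall phi : {poly R}, (size phi <= n.+1)%N -> pint (G^`(n.+1) * phi) a b = 0) ->
  forall j, (j <= n)%N -> (G^`(j)).[b] = 0.
Proof.
move=> ha ho j hj.
have hs : (size (('X - b%:P) ^+ (n - j)) <= n.+1)%N.
  by rewrite size_exp_XsubC ltnS leq_subr.
have := ho _ hs; rewrite pint_ibp // (ibp_at0 _ ha) subr0.
rewrite ibp_pow ?leq_subr // subKn // => /eqP.
rewrite !mulf_eq0 signr_eq0 pnatr_eq0 (negbTE (lt0n_neq0 (fact_gt0 _))) /=.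
by move/eqP.
Qed.

Lemma derivn_mulXsubC (R : realFieldType) (q : {poly R}) b j :
  (q * ('X - b%:P))^`(j.+1) = q^`(j.+1) * ('X - b%:P) + q^`(j) *+ j.+1.
Proof.
elim: j => [|j IH].
  by rewrite !derivn1 derivM derivXsubC mulr1 derivn0.
rewrite derivnS IH derivD derivM derivXsubC mulr1 derivMn -!derivnS.
by rewrite -addrA -mulrS.
Qed.

Lemma vanish_dvd (R : realFieldType) (b : R) n (p : {poly R}) :
  (forall j, (j < n)%N -> (p^`(j)).[b] = 0) -> ('X - b%:P) ^+ n %| p.
Proof.
elim: n p => [|n IH] p hp; first by rewrite expr0 dvd1p.
have : root p b by rewrite /root -(derivn0 p) hp.
case/factor_theorem => q hq; subst p.
rewrite exprSr dvdp_mul2r; last by rewrite polyXsubC_eq0.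
apply: IH => j hj.
have := hp j.+1 hj; rewrite derivn_mulXsubC hornerD hornerM hornerXsubC subrr.
rewrite mulr0 add0r hornerMn => /eqP; rewrite mulrn_eq0 /=.
by move/eqP.
Qed.

Lemma dvd_deriv1 (R : realFieldType) (b : R) n (r : {poly R}) :
  ('X - b%:P) ^+ n.+1 %| r -> ('X - b%:P) ^+ n %| r^`().
Proof.
case/dvdpP => s ->; rewrite derivM deriv_exp derivXsubC mul1r /=.
rewrite dvdp_add //.
  by rewrite dvdp_mull // dvdp_exp2l.
by rewrite -mulr_natr dvdp_mull // dvdp_mulr.
Qed.

Lemma dvd_derivn (R : realFieldType) (b : R) j n (p : {poly R}) :
  ('X - b%:P) ^+ (n + j) %| p -> ('X - b%:P) ^+ n %| p^`(j).
Proof.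
elim: j n => [|j IH] n; first by rewrite addn0 derivn0.
rewrite derivnS addnS -addSn => /IH; exact: dvd_deriv1.
Qed.

Lemma dvd_root (R : realFieldType) (b : R) n (p : {poly R}) :
  (0 < n)%N -> ('X - b%:P) ^+ n %| p -> p.[b] = 0.
Proof.
move=> hn hd; apply/eqP; rewrite -/(root p b) root_factor_theorem.
apply: dvdp_trans hd; rewrite -{1}(expr1 ('X - b%:P)); exact: dvdp_exp2l.
Qed.



Lemma prod_dvd (R : realFieldType) (G : {poly R}) n T (c : nat -> R) :
  (forall s t, (s < T)%N -> (t < T)%N -> c s = c t -> s = t) ->
  (forall t, (t < T)%N -> ('X - (c t)%:P) ^+ n %| G) ->
  \prod_(t < T) ('X - (c t)%:P) ^+ n %| G.
Proof.
elim: T => [|T IH] hinj hd; first by rewrite big_ord0 dvd1p.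
rewrite big_ord_recr /= Gauss_dvdp.
  rewrite IH ?hd //.
    by move=> s t hs ht; apply: hinj; apply: ltnW.
  by move=> t ht; apply: hd; apply: ltnW.
apply: coprimep_expr; rewrite coprimep_XsubC rootE horner_prod.
apply/prodf_neq0 => t _; rewrite horner_exp hornerXsubC expf_neq0 // subr_eq0.
apply/eqP => e; have := hinj _ _ (ltnSn T) (ltnW (ltn_ord t)) e.
by move=> et; move: (ltn_ord t); rewrite -et ltnn.
Qed.

Lemma size_prod_pow (R : realFieldType) n T (c : nat -> R) :
  size (\prod_(t < T) ('X - (c t)%:P) ^+ n) = (T * n).+1.
Proof.
elim: T => [|T IH]; first by rewrite big_ord0 size_poly1.
rewrite big_ord_recr /= size_mul ?IH ?size_exp_XsubC.
- rewrite mulSn; lia.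
- by rewrite -size_poly_gt0 IH.
- by rewrite expf_neq0 // polyXsubC_eq0.
Qed.

Definition pa (R : realFieldType) (a : R) (q : {poly R}) : {poly R} :=
  primp q - ((primp q).[a])%:P.

Lemma pa_deriv (R : realFieldType) (a : R) q : (pa a q)^`() = q.
Proof. by rewrite /pa derivB deriv_primp derivC subr0. Qed.

Lemma pa_at (R : realFieldType) (a : R) q : (pa a q).[a] = 0.
Proof. by rewrite /pa hornerD hornerN hornerC subrr. Qed.

Lemma size_pa (R : realFieldType) (a : R) q : (size (pa a q) <= (size q).+1)%N.
Proof.
rewrite /pa (leq_trans (size_add _ _)) // geq_max size_opp size_polyC.
rewrite size_poly /=; by case: (_ != 0).
Qed.

Lemma iter_pa_derivn (R : realFieldType) (a : R) n j q :
  (j <= n)%N -> (iter n (pa a) q)^`(j) = iter (n - j) (pa a) q.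
Proof.
elim: j => [|j IH] hj; first by rewrite derivn0 subn0.
rewrite derivnS IH ?(ltnW hj) //.
have -> : (n - j)%N = (n - j.+1).+1 by lia.
by rewrite iterS pa_deriv.
Qed.

Lemma size_iter_pa (R : realFieldType) (a : R) n q :
  (size (iter n (pa a) q) <= size q + n)%N.
Proof.
elim: n => [|n IH]; first by rewrite addn0.
rewrite iterS (leq_trans (size_pa _ _)) //; lia.
Qed.

Lemma core (R : realFieldType) N (h x0 : R) (w : {poly R}) : 0 < h ->
  (size w <= (3 * N + 2).+1)%N ->
  (forall (j : 'I_3) (phi : {poly R}), (size phi <= N.+1)%N ->
     pint (w * phi) (cell_left x0 h j) (cell_left x0 h j + h) = 0) -> w = 0.
Proof.
move=> hpos hs hw.
pose a := x0 - h.
have hcell : forall t, (t < 3)%N -> forall phi : {poly R}, (size phi <= N.+1)%N ->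
    pint (w * phi) (a + t%:R * h) (a + t%:R * h + h) = 0.
  move=> t ht phi hphi; exact: (hw (Ordinal ht) phi hphi).
have hpt : forall t, (t <= 3)%N -> forall phi : {poly R}, (size phi <= N.+1)%N ->
    pint (w * phi) a (a + t%:R * h) = 0.
  elim=> [|t IH] ht phi hphi; first by rewrite mul0r addr0 /pint subrr.
  rewrite -(pint_split _ _ (a + t%:R * h)) IH ?(ltnW ht) // add0r.
  have -> : a + t.+1%:R * h = a + t%:R * h + h by rewrite mulrSr mulrDl mul1r addrA.
  exact: hcell.
pose G := iter N.+1 (pa a) w.
have hGw : G^`(N.+1) = w by rewrite /G iter_pa_derivn // subnn.
have hGa : forall j, (j <= N)%N -> (G^`(j)).[a] = 0.
  move=> j hj; rewrite /G iter_pa_derivn ?(leqW hj) // subSn //.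
  by rewrite iterS pa_at.
have hGb : forall t, (t < 4)%N -> ('X - (a + t%:R * h)%:P) ^+ N.+1 %| G.
  move=> t ht; apply: vanish_dvd => j hj.
  apply: (ortho_to_vanish hGa _ hj) => phi hphi; rewrite hGw; exact: hpt.
have hdiv : \prod_(t < 4) ('X - (a + t%:R * h)%:P) ^+ N.+1 %| G.
  apply: (@prod_dvd _ G N.+1 4 (fun t => a + t%:R * h)) => [s t hs1 ht1|t ht]; last exact: hGb.
  move=> /addrI /(mulIf (lt0r_neq0 hpos)) /eqP; rewrite eqr_nat.
  by move/eqP.
rewrite -hGw.
suff -> : G = 0 by rewrite derivn_poly0 ?size_poly0.
apply/eqP; apply: contraT => hG0.
have := dvdp_leq hG0 hdiv; rewrite (size_prod_pow _ _ (fun t => a + t%:R * h)).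
have : (size G <= size w + N.+1)%N by apply: size_iter_pa.
move=> h1 h2; move: h1 h2 hs; move: (size G) (size w) => sG sw; lia.
Qed.



Lemma span_lemma (R : realFieldType) (B : nat -> {poly R}) (L : {poly R} -> R) n :
  (forall k, size (B k) = k.+1) ->
  (forall p q, L (p + q) = L p + L q) -> (forall c p, L (c *: p) = c * L p) ->
  (forall k, (k < n)%N -> L (B k) = 0) ->
  forall p : {poly R}, (size p <= n)%N -> L p = 0.
Proof.
move=> hB hD hZ; elim: n => [|n IH] hL p hp.
  move: hp; rewrite leqn0 size_poly_eq0 => /eqP ->.
  by rewrite -(scale0r (0 : {poly R})) hZ mul0r.
pose c := p`_n / lead_coef (B n).
have hlc : lead_coef (B n) != 0 by rewrite lead_coef_eq0 -size_poly_gt0 hB.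
have -> : p = (p - c *: B n) + c *: B n by rewrite subrK.
rewrite hD hZ hL // mulr0 addr0 IH //.
  by move=> k hk; apply: hL; apply: ltnW.
apply/leq_sizeP => j hj; rewrite coefB coefZ.
case: (ltngtP j n) => hjn.
- by move: hj; rewrite leqNgt hjn.
- rewrite !nth_default ?mulr0 ?subr0 //; first by rewrite hB.
  exact: leq_trans hp hjn.
- rewrite hjn /c.
  have -> : (B n)`_n = lead_coef (B n) by rewrite lead_coefE hB.
  by rewrite divfK // subrr.
Qed.

Lemma part2 (R : realFieldType) (N : nat) (h x0 : R) (hpos : 0 < h)
  (v : 'I_3 -> {poly R}) :
  exists! w : {poly R},
    (size w <= (3 * N + 2).+1)%N /\
    forall (j : 'I_3) (phi : {poly R}), (size phi <= N.+1)%N ->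
      pint (w * phi) (cell_left x0 h j) (cell_left x0 h j + h) =
      pint (v j * phi) (cell_left x0 h j) (cell_left x0 h j + h).
Proof.
pose n := (3 * N + 2).+1.
pose jj (c : nat) : 'I_3 := inord (c %/ N.+1).
pose kk (c : nat) := (c %% N.+1)%N.
pose M : 'M[R]_n := \matrix_(i < n, c < n)
   pint ('X^i * 'X^(kk c)) (cell_left x0 h (jj c)) (cell_left x0 h (jj c) + h).
pose pr (x : 'rV[R]_n) : {poly R} := \poly_(i < n) x 0 (inord i).
have hMx : forall x c, (x *m M) 0 c =
    pint (pr x * 'X^(kk c)) (cell_left x0 h (jj c)) (cell_left x0 h (jj c) + h).
  move=> x c; rewrite !mxE /pr poly_def mulr_suml pint_sum; apply: eq_bigr => i _.
  by rewrite mxE -scalerAl pintZ inord_val.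
have hjk : forall (j : 'I_3) k, (k < N.+1)%N -> exists c : 'I_n, jj c = j /\ kk c = k.
  move=> j k hk; have hc : (j * N.+1 + k < n)%N.
    have := ltn_ord j; rewrite /n; nia.
  exists (Ordinal hc); split.
    apply: val_inj; rewrite /jj /= inordK divnMDl // divn_small // addn0 //.
  by rewrite /kk /= modnMDl modn_small.
have hsp : forall (p : {poly R}) (q : 'I_3 -> {poly R}),
  (forall c : 'I_n, pint (p * 'X^(kk c)) (cell_left x0 h (jj c)) (cell_left x0 h (jj c) + h)
    = pint (q (jj c) * 'X^(kk c)) (cell_left x0 h (jj c)) (cell_left x0 h (jj c) + h)) ->
  forall j (phi : {poly R}), (size phi <= N.+1)%N ->
    pint (p * phi) (cell_left x0 h j) (cell_left x0 h j + h)
    = pint (q j * phi) (cell_left x0 h j) (cell_left x0 h j + h).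
  move=> p q hc j phi hphi; apply/eqP; rewrite -subr_eq0; apply/eqP.
  apply: (@span_lemma _ (fun k => 'X^k) (fun phi => pint (p * phi) (cell_left x0 h j) (cell_left x0 h j + h) - pint (q j * phi) (cell_left x0 h j) (cell_left x0 h j + h)) N.+1) => //.
  - by move=> k; rewrite size_polyXn.
  - by move=> r s; rewrite !mulrDr !pintD; ring.
  - by move=> r s; rewrite -!scalerAr !pintZ; ring.
  - move=> k hk; case: (hjk j k hk) => c [hj hk'].
    by have := hc c; rewrite hj hk' => ->; rewrite subrr.
have hinj : forall x : 'rV[R]_n, x *m M = 0 -> x = 0.
  move=> x hx; have hw : pr x = 0.
    apply: (core hpos (size_poly _ _)) => j phi hphi.
    have := hsp (pr x) (fun _ => 0) _ j phi hphi; rewrite mul0r pint0; apply.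
    by move=> c; rewrite -hMx hx mxE mul0r pint0.
  apply/rowP => i; rewrite mxE.
  by have := congr1 (fun r : {poly R} => r`_i) hw; rewrite /pr coef_poly ltn_ord coef0 inord_val.
have hM : M \in unitmx.
  rewrite unitmxE unitfE; apply/det0P => -[x hx0 hx]; move: hx0.
  by rewrite (hinj x hx) eqxx.
pose y : 'rV[R]_n := \row_c
   pint (v (jj c) * 'X^(kk c)) (cell_left x0 h (jj c)) (cell_left x0 h (jj c) + h).
pose x := y *m invmx M.
have hxM : x *m M = y by rewrite /x mulmxKV.
have hx : forall j (phi : {poly R}), (size phi <= N.+1)%N ->
    pint (pr x * phi) (cell_left x0 h j) (cell_left x0 h j + h)
    = pint (v j * phi) (cell_left x0 h j) (cell_left x0 h j + h).
  by apply: hsp => c; rewrite -hMx hxM mxE.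
exists (pr x); split.
  by split; first exact: size_poly.
move=> w' [hs' hw'].
apply/eqP; rewrite -subr_eq0; apply/eqP; apply: (core (N := N) (x0 := x0) hpos).
  rewrite (leq_trans (size_add _ _)) // geq_max size_opp hs' andbT.
  exact: size_poly.
by move=> j phi hphi; rewrite mulrBl pintB (hw' j phi hphi) (hx j phi hphi) subrr.
Qed.



Lemma comp_polyN' (R : realFieldType) (p q : {poly R}) : (- p) \Po q = - (p \Po q).
Proof. by rewrite -scaleN1r comp_polyZ scaleN1r. Qed.

Lemma comp_exp (R : realFieldType) (p q : {poly R}) k : (p ^+ k) \Po q = (p \Po q) ^+ k.
Proof.
elim: k => [|k IH]; first by rewrite !expr0 -polyC1 comp_polyC.
by rewrite !exprS comp_polyM IH.
Qed.

Lemma comp_sum (R : realFieldType) (I : Type) (r : seq I) (F : I -> {poly R}) q :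
  (\sum_(i <- r) F i) \Po q = \sum_(i <- r) (F i \Po q).
Proof.
elim: r => [|x r IH]; first by rewrite !big_nil comp_poly0.
by rewrite !big_cons comp_polyD IH.
Qed.

Lemma derivnZ' (R : realFieldType) (c : R) (p : {poly R}) n :
  (c *: p)^`(n) = c *: p^`(n).
Proof. by elim: n => [|n IH]; rewrite ?derivn0 // !derivnS IH derivZ. Qed.

Lemma derivn_derivn (R : realFieldType) (p : {poly R}) a b :
  p^`(a)^`(b) = p^`(a + b).
Proof. by elim: b => [|b IH]; rewrite ?derivn0 ?addn0 // derivnS IH addnS derivnS. Qed.

Lemma derivn_compN (R : realFieldType) (p : {poly R}) n :
  (p \Po (- 'X))^`(n) = (-1) ^+ n *: (p^`(n) \Po (- 'X)).
Proof.
elim: n => [|n IH]; first by rewrite !derivn0 expr0 scale1r.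
rewrite derivnS IH derivZ deriv_comp derivN derivX -derivnS mulrN1.
by rewrite scalerN exprS mulN1r scaleNr.
Qed.

Definition lq (R : realFieldType) (m : nat) : {poly R} := ('X ^+ 2 - 1) ^+ m.

Lemma legendreE (R : realFieldType) m :
  legendre R m = ((2%:R ^+ m * m`!%:R)^-1) *: (lq R m)^`(m).
Proof. by []. Qed.

Lemma lq_odd (R : realFieldType) m : lq R m \Po (- 'X) = lq R m.
Proof.
by rewrite /lq comp_exp comp_polyB comp_exp comp_polyX sqrrN -polyC1 comp_polyC.
Qed.

Lemma legendre_odd (R : realFieldType) k :
  legendre R k \Po (- 'X) = (-1) ^+ k *: legendre R k.
Proof.
have E := derivn_compN (lq R k) k; rewrite lq_odd in E.
have E2 : (lq R k)^`(k) \Po (- 'X) = (-1) ^+ k *: (lq R k)^`(k).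
  have s : ((-1) ^+ k * (-1) ^+ k : R) = 1 by rewrite -exprMn mulrNN mulr1 expr1n.
  by rewrite {2}E scalerA s scale1r.
by rewrite legendreE comp_polyZ E2 !scalerA mulrC.
Qed.

Lemma lq_size (R : realFieldType) m : size (lq R m) = (2 * m).+1 /\ (lq R m)`_(2 * m) = 1.
Proof.
have hm : ('X ^+ 2 - 1 : {poly R}) \is monic by rewrite -polyC1 monicXnsubC.
have hq : lq R m \is monic by rewrite /lq monic_exp.
have hs : size (lq R m) = (2 * m).+1.
  have := size_exp ('X ^+ 2 - 1 : {poly R}) m.
  rewrite -polyC1 size_XnsubC // /= -/(lq R m) mulnC => <-.
  by rewrite prednK // size_poly_gt0 monic_neq0.
split => //; by have := monicP hq; rewrite lead_coefE hs.
Qed.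

Lemma coef_legendre (R : realFieldType) m i :
  (legendre R m)`_i = (2%:R ^+ m * m`!%:R)^-1 * ((lq R m)`_(m + i) *+ (m + i) ^_ m).
Proof. by rewrite legendreE coefZ coef_derivn. Qed.

Lemma size_legendre (R : realFieldType) m : size (legendre R m) = m.+1.
Proof.
have [hs h1] := lq_size R m.
have hc : (2%:R ^+ m * m`!%:R : R)^-1 != 0.
  by rewrite invr_eq0 mulf_neq0 // ?expf_neq0 // pnatr_eq0 // -lt0n fact_gt0.
apply/eqP; rewrite eqn_leq; apply/andP; split.
  apply/leq_sizeP => j hj; rewrite coef_legendre nth_default ?mul0rn ?mulr0 //.
  by rewrite hs; lia.
rewrite ltnNge; apply/negP => /leq_sizeP /(_ m (leqnn m)) /eqP.
rewrite coef_legendre mulf_eq0 (negbTE hc) /= addnn -mul2n h1 mulrn_eq0 oner_eq0 orbF.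
  move=> /eqP h; have : (m <= 2 * m)%N by lia.
  by rewrite -ffact_gt0 h.
Qed.

Lemma legendre_ortho (R : realFieldType) N m (phi : {poly R}) :
  (N < m)%N -> (size phi <= N.+1)%N -> pint (legendre R m * phi) (-1) 1 = 0.
Proof.
move=> hm hphi.
pose c : R := (2%:R ^+ m * m`!%:R)^-1.
pose G := c *: (lq R m)^`(m - N.+1).
have hG : G^`(N.+1) = legendre R m.
  by rewrite /G derivnZ' derivn_derivn subnK.
have hq : forall b : R, b = 1 \/ b = -1 -> ('X - b%:P) ^+ m %| lq R m.
  move=> b hb; rewrite /lq.
  have -> : 'X ^+ 2 - 1 = ('X - 1%:P) * ('X - (-1)%:P) :> {poly R}.
    by rewrite polyCN polyC1; ring.
  rewrite exprMn; case: hb => ->; [exact: dvdp_mulr | exact: dvdp_mull].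
have hv : forall b : R, b = 1 \/ b = -1 -> forall j, (j <= N)%N -> (G^`(j)).[b] = 0.
  move=> b hb j hj; rewrite /G derivnZ' derivn_derivn hornerZ.
  rewrite (@dvd_root _ b (m - (m - N.+1 + j))) ?mulr0 //; first by lia.
  apply: dvd_derivn; rewrite subnK; first exact: hq.
  lia.
rewrite -hG; apply: vanish_to_ortho => //.
  by apply: hv; right.
by apply: hv; left.
Qed.



Lemma indep (R : realFieldType) (B : nat -> {poly R}) m n (x : nat -> R) :
  (forall k, size (B k) = k.+1) ->
  \sum_(l < n) x l *: B (m + l)%N = 0 -> forall l, (l < n)%N -> x l = 0.
Proof.
move=> hB; elim: n => [|n IH] hs l hl; first by [].
move: hs; rewrite big_ord_recr /= => hs.
have hxn : x n = 0.
  have := congr1 (fun r : {poly R} => r`_(m + n)) hs.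
  rewrite coefD coef_sum big1 ?add0r; last first.
    move=> i _; rewrite coefZ nth_default ?mulr0 // hB.
    by have := ltn_ord i; lia.
  rewrite coefZ coef0 => /eqP; rewrite mulf_eq0 => /orP [/eqP //|].
  have hl' : lead_coef (B (m + n)%N) != 0 by rewrite lead_coef_eq0 -size_poly_gt0 hB.
  by move: hl'; rewrite lead_coefE hB /= => /negbTE ->.
move: hs; rewrite hxn scale0r addr0 => hs.
case: (ltngtP l n) => hln.
- exact: IH.
- by move: hl; rewrite ltnS leqNgt hln.
- by rewrite hln.
Qed.

Lemma bcoefE (R : realFieldType) k l :
  bcoef R k l = pint (legendre R k * (legendre R l \Po ('X - 2%:P))) (-1) 1.
Proof.
have -> : pint (legendre R k * (legendre R l \Po ('X - 2%:P))) (-1) 1 =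
    pint ((legendre R k * (legendre R l \Po ('X - 2%:P))) \Po (- 'X)) (-1) 1.
  by rewrite pint_refl opprK.
have e1 : (legendre R l \Po ('X - 2%:P)) \Po (- 'X) =
    (-1) ^+ l *: (legendre R l \Po ('X + 2%:P)).
  rewrite -comp_polyA comp_polyB comp_polyX comp_polyC.
  rewrite -comp_polyZ -legendre_odd -comp_polyA comp_polyN' comp_polyX.
  by rewrite opprD.
rewrite comp_polyM e1 legendre_odd -scalerAl -scalerAr !pintZ /bcoef /acoef.
by rewrite exprD mulrA.
Qed.

Lemma ar0 (R : realFieldType) : -1 - 2 + (0%N)%:R * 2 = -1 + -2 :> R.
Proof. ring. Qed.
Lemma ar1 (R : realFieldType) : -1 - 2 + (1%N)%:R * 2 = -1 :> R.
Proof. ring. Qed.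
Lemma ar2 (R : realFieldType) : -1 - 2 + (2%N)%:R * 2 = -1 + 2 :> R.
Proof. ring. Qed.
Lemma ar3 (R : realFieldType) : -1 + -2 + 2 = 1 + -2 :> R.
Proof. ring. Qed.
Lemma ar4 (R : realFieldType) : -1 + 2 = 1 :> R.
Proof. ring. Qed.
Lemma ar5 (R : realFieldType) : -1 + 2 + 2 = 1 + 2 :> R.
Proof. ring. Qed.

Lemma part1 (R : realFieldType) (N : nat) : Bmat R N \in unitmx.
Proof.
rewrite unitmxE unitfE -det_tr; apply/det0P => -[u hu0 hu].
pose K := (N.+1 + N.+1)%N.
pose w := \sum_(l < K) u 0 l *: legendre R (N.+1 + l).
have hsh : forall (q : {poly R}) (k : nat),
    pint (legendre R k * (w \Po q)) (-1) 1 =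
    \sum_(l < K) u 0 l * pint (legendre R k * (legendre R (N.+1 + l) \Po q)) (-1) 1.
  move=> q k; rewrite /w comp_sum mulr_sumr pint_sum; apply: eq_bigr => l _.
  by rewrite comp_polyZ -scalerAr pintZ.
have hSa : forall k : 'I_N.+1, \sum_(l < K) u 0 l * acoef R k (N.+1 + l) = 0.
  move=> k; have := congr1 (fun M : 'rV[R]_K => M 0 (lshift N.+1 k)) hu.
  rewrite !mxE /= => e; rewrite -[X in _ = X]e; apply: eq_bigr => l _.
  by rewrite [(Bmat R N)^T _ _]mxE /Bmat col_mxEu mxE.
have hSc : forall k : 'I_N.+1, \sum_(l < K) u 0 l * ccoef R k (N.+1 + l) = 0.
  move=> k; have := congr1 (fun M : 'rV[R]_K => M 0 (rshift N.+1 k)) hu.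
  rewrite !mxE /= => e; rewrite -[X in _ = X]e; apply: eq_bigr => l _.
  by rewrite [(Bmat R N)^T _ _]mxE /Bmat col_mxEd mxE.
have hSb : forall k : 'I_N.+1, \sum_(l < K) u 0 l * bcoef R k (N.+1 + l) = 0.
  move=> k.
  have -> : \sum_(l < K) u 0 l * bcoef R k (N.+1 + l) =
      \sum_(l < K) (2 * (u 0 l * ccoef R k (N.+1 + l)) - u 0 l * acoef R k (N.+1 + l)).
    by apply: eq_bigr => l _; rewrite /ccoef; field.
  by rewrite sumrB -mulr_sumr hSa hSc mulr0 subrr.
have hLA : forall phi : {poly R}, (size phi <= N.+1)%N ->
    pint (phi * (w \Po ('X + 2%:P))) (-1) 1 = 0.
  move=> phi0 hphi0.
  apply: (@span_lemma _ (legendre R) (fun phi => pint (phi * (w \Po ('X + 2%:P))) (-1) 1) N.+1 (@size_legendre R)) => //.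
  - by move=> p q /=; rewrite mulrDl pintD.
  - by move=> c p /=; rewrite -scalerAl pintZ.
  - by move=> k hk; rewrite hsh; exact: (hSa (Ordinal hk)).
have hLB : forall phi : {poly R}, (size phi <= N.+1)%N ->
    pint (phi * (w \Po ('X - 2%:P))) (-1) 1 = 0.
  move=> phi0 hphi0.
  apply: (@span_lemma _ (legendre R) (fun phi => pint (phi * (w \Po ('X - 2%:P))) (-1) 1) N.+1 (@size_legendre R)) => //.
  - by move=> p q /=; rewrite mulrDl pintD.
  - by move=> c p /=; rewrite -scalerAl pintZ.
  - move=> k hk; rewrite hsh -[X in _ = X](hSb (Ordinal hk)); apply: eq_bigr => l _.
    by rewrite bcoefE.
have hsc : forall (phi : {poly R}) (c : R), (size phi <= N.+1)%N ->
    (size (phi \Po ('X + c%:P)) <= N.+1)%N.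
  move=> phi c hphi; rewrite (leq_trans (size_comp_poly_leq _ _)) //.
  rewrite size_XaddC muln1; move: hphi; case: (size phi) => //= s; lia.
have hw0 : w = 0.
  apply: (@core _ N 2 (-1)); first by [].
    rewrite /w (leq_trans (size_sum _ _ _)) //; apply/bigmax_leqP => l _.
    rewrite (leq_trans (size_scale_leq _ _)) // size_legendre.
    by have := ltn_ord l; rewrite /K; lia.
  move=> j phi hphi; case: j => -[|[|[|j]]] hj //.
  - rewrite /cell_left /= ar0 ar3.
    rewrite -pint_shift comp_polyM mulrC polyCN; apply: hLB.
    by have := hsc phi (-2) hphi; rewrite polyCN.
  - rewrite /cell_left /= ar1 ar4.
    rewrite /w mulr_suml pint_sum big1 // => l _.
    by rewrite -scalerAl pintZ (@legendre_ortho _ N) ?mulr0 //; lia.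
  - rewrite /cell_left /= ar2 ar5.
    rewrite -pint_shift comp_polyM mulrC; apply: hLA.
    exact: hsc.
move: hu0; apply/negP; rewrite negbK; apply/eqP/rowP => l; rewrite mxE.
have hl := @indep _ (legendre R) N.+1 K (fun l => u 0 (inord l)) (@size_legendre R).
rewrite -(inord_val l); apply: hl => //.
by rewrite -[X in _ = X]hw0 /w; apply: eq_bigr => i _; rewrite inord_val.
Qed.

Unset Implicit Arguments.

Theorem mainTheorem1 (R : realFieldType) (N : nat) (h x0 : R) (hpos : 0 < h)
  (v : 'I_3 -> {poly R}) (hv : forall j, (size (v j) <= N.+1)%N) :
  Bmat R N \in unitmx /\
  exists! w : {poly R},
    (size w <= (3 * N + 2).+1)%N /\
    forall (j : 'I_3) (phi : {poly R}), (size phi <= N.+1)%N ->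
      pint (w * phi) (cell_left x0 h j) (cell_left x0 h j + h) =
      pint (v j * phi) (cell_left x0 h j) (cell_left x0 h j + h).
Proof.
split; [exact: part1 | exact: part2].
Qed.
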